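(* Let $1\le q_1<q_2<\cdots$ be a strictly increasing sequence of integers with partial sums $S_n=q_1+\dots+q_n$. For each $n\in\mathbb{N}$ write $$f_n(x)=(1+x^{q_1})\cdots(1+x^{q_n})=\sum_{m=0}^{S_n}\gamma_m(n)x^m.$$ Suppose there exist positive integers $k_0$ and $n_0$ such that $$2k_0+q_{n+1}\le S_n\quad\text{for all } n\ge n_0,\qquad\text{and}\qquad \gamma_m(n_0)\ge 1\quad\text{for all integers } m \text{ with } k_0\le m\le S_{n_0}-k_0.$$ Then every integer $N\ge k_0$ is a sum of one or more distinct members of $\{q_1,q_2,\dots\}$. *)

(* Defs.v *)
From mathcomp Require Import all_boot all_order all_algebra.
Set Implicit Arguments. Unset Strict Implicit. Unset Printing Implicit Defensive.
Import GRing.Theory Num.Theory.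

(* The sequence q_1 < q_2 < ... is modelled by q : nat -> nat, 1-indexed
   (the value q 0 is irrelevant and never used). *)

Definition Ssum (q : nat -> nat) (n : nat) : nat := \sum_(1 <= i < n.+1) q i.

Definition f (q : nat -> nat) (n : nat) : {poly int} :=
  \prod_(1 <= i < n.+1) (1 + 'X^(q i)).

Definition gamma (q : nat -> nat) (m n : nat) : int := (f q n)`_m.

(* Main.v *)
Require Import Defs.
From mathcomp Require Import all_boot all_order all_algebra.
From mathcomp Require Import zify.
Import GRing.Theory Num.Theory.
Set Implicit Arguments.

Definition rep (q : nat -> nat) (n m : nat) :=
  exists s : seq nat, [/\ uniq s, all (fun i => (0 < i) && (i <= n))%N s &
                         m = \sum_(i <- s) q i].

Lemma f_S q n : f q n.+1 = (f q n * (1 + 'X^(q n.+1)))%R.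
Proof. by rewrite /f big_nat_recr. Qed.

Lemma Ssum_S q n : Ssum q n.+1 = (Ssum q n + q n.+1)%N.
Proof. by rewrite /Ssum big_nat_recr. Qed.

Lemma rep_add q n m : rep q n m -> rep q n.+1 (m + q n.+1).
Proof.
case=> s [us al ->]; exists (n.+1 :: s); split.
- rewrite /= us andbT; apply/negP => /(allP al) /andP [_]; by rewrite ltnn.
- rewrite /= leqnn /=; apply/allP => i /(allP al) /andP [-> /= H]; lia.
- by rewrite big_cons addnC.
Qed.

Lemma rep_mono q n m : rep q n m -> rep q n.+1 m.
Proof.
case=> s [us al ->]; exists s; split => //.
apply/allP => i /(allP al) /andP [-> /= H]; lia.
Qed.

Lemma coef_rep q n m : ((f q n)`_m != 0)%R -> rep q n m.
Proof.
elim: n m => [|n IH] m.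
  rewrite /f big_geq // coef1; case: m => [|m] //= _.
  by exists [::]; rewrite big_nil.
rewrite f_S mulrDr mulr1 coefD coefMXn.
case: (ltnP m (q n.+1)) => Hm.
  by rewrite addr0 => /IH /rep_mono.
case: (eqVneq ((f q n)`_m)%R 0%R) => H0.
  rewrite H0 add0r => /IH R.
  have := rep_add R; by rewrite subnK.
by move=> _; apply: rep_mono; apply: IH.
Qed.

Lemma qge q : (1 <= q 1)%N -> (forall i : nat, (1 <= i)%N -> (q i < q i.+1)%N) ->
  forall i, (1 <= i)%N -> (i <= q i)%N.
Proof.
move=> h1 hi; elim=> [//|[|i] IH _] //.
have := hi i.+1 isT; have := IH isT; lia.
Qed.

Theorem theorem2p1 (q : nat -> nat) (k0 n0 : nat) :
  (1 <= q 1)%N ->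
  (forall i : nat, (1 <= i)%N -> (q i < q i.+1)%N) ->
  (0 < k0)%N -> (0 < n0)%N ->
  (forall n : nat, (n0 <= n)%N -> (2 * k0 + q n.+1 <= Ssum q n)%N) ->
  (forall m : nat, (k0 <= m)%N -> (m <= Ssum q n0 - k0)%N ->
     (1 <= gamma q m n0)%R) ->
  forall N : nat, (k0 <= N)%N ->
    exists s : seq nat,
      [/\ s != [::], uniq s, all (fun i => 0 < i)%N s &
          N = \sum_(i <- s) q i].
Proof.
move=> h1 hi hk hn hS hg.
have main : forall d m, (k0 <= m)%N -> (m <= Ssum q (n0 + d) - k0)%N -> rep q (n0 + d) m.
  elim=> [|d IH] m km mS.
    rewrite addn0 in mS *; apply: coef_rep.
    have := hg m km mS; rewrite /gamma.
    case: (eqVneq ((f q n0)`_m)%R 0%R) => // ->; by rewrite ler10.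
  rewrite addnS in mS *; rewrite Ssum_S in mS.
  have hs := hS (n0 + d) (leq_addr _ _).
  case: (leqP m (Ssum q (n0 + d) - k0)) => H.
    by apply: rep_mono; apply: IH.
  have := rep_add (IH (m - q (n0 + d).+1) ltac:(lia) ltac:(lia)).
  by rewrite subnK //; lia.
have SS : forall n, (n <= Ssum q n)%N.
  elim=> [//|n IH]; rewrite Ssum_S; have := @qge q h1 hi n.+1 isT; lia.
move=> N kN.
have := main (N + k0) N kN.
have := SS (n0 + (N + k0)); move=> h /(_ ltac:(lia)) [s [us al E]].
exists s; split => //.
- by apply/eqP => s0; move: E; rewrite s0 big_nil; lia.
- by apply/allP => i /(allP al) /andP [].
Qed.
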